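(* Let $G$ be a (nonempty) complete graph whose vertices are each colored $A$, $B$ or $C$. The value of the Normal Partizan Domination game on $G$ is $1$ if every vertex has color $A$, is $-1$ if every vertex has color $B$, and is $*$ otherwise.
   Context: Normal Partizan Domination game: a finite graph $G$ has each vertex colored $A$, $B$ or $C$. Alice and Bob alternately select a vertex; Alice may only select vertices colored $A$ or $C$, Bob only vertices colored $B$ or $C$. A vertex $u$ dominates $v$ if $u=v$ or $uv$ is an edge. A vertex may be selected only if it is playable, i.e. it dominates at least one vertex not dominated by the previously selected vertices; the game ends when the selected vertices form a dominating set. Under normal play the player unable to move loses. The game is regarded as a partizan combinatorial game with Alice as Left and Bob as Right, and its value is its value in Conway's combinatorial game theory ($\{X\mid Y\}$ has Left options $X$ and Right options $Y$; $G=H$ iff $G+(-H)$ is a second-player win). Here $1=\{0\mid\}$, $-1=\{\mid 0\}$, $*=\{0\mid 0\}$, $0=\{\mid\}$. *)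

(* Defs.v *)
From mathcomp Require Import all_boot.
Set Implicit Arguments. Unset Strict Implicit. Unset Printing Implicit Defensive.

Inductive game : Type := Game of seq game & seq game.

Definition lopts (g : game) : seq game := let: Game L _ := g in L.
Definition ropts (g : game) : seq game := let: Game _ R := g in R.

Fixpoint gneg (g : game) : game :=
  let: Game L R := g in Game (map gneg R) (map gneg L).

Fixpoint gadd (g : game) : game -> game :=
  fix gadd_g (h : game) : game :=
    match g, h with
    | Game gL gR, Game hL hR =>
        Game ([seq gadd x h | x <- gL] ++ [seq gadd_g y | y <- hL])
             ([seq gadd x h | x <- gR] ++ [seq gadd_g y | y <- hR])
    end.

(** Outcome under normal play: (Left wins moving first, Right wins moving first). *)
Fixpoint outcome (g : game) : bool * bool :=
  let: Game L R := g in
  (has (fun x => ~~ (outcome x).2) L, has (fun x => ~~ (outcome x).1) R).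

Definition second_player_win (g : game) : bool :=
  ~~ (outcome g).1 && ~~ (outcome g).2.

Definition game_eq (g h : game) : bool := second_player_win (gadd g (gneg h)).

Definition g0 : game := Game [::] [::].
Definition g1 : game := Game [:: g0] [::].
Definition gm1 : game := Game [::] [:: g0].
Definition gstar : game := Game [:: g0] [:: g0].

Inductive color := cA | cB | cC.

Definition left_can (c : color) : bool := if c is cB then false else true.
Definition right_can (c : color) : bool := if c is cA then false else true.

Section Domination.
Variables (T : finType) (e : rel T) (col : T -> color).

Definition cnbhd (v : T) : {set T} := [set u | (u == v) || e v u].

(** v is playable when D is the set of already dominated vertices *)
Definition playable (D : {set T}) (v : T) : bool := ~~ (cnbhd v \subset D).

Fixpoint dom_game (n : nat) (D : {set T}) : game :=
  match n with
  | 0 => g0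
  | n'.+1 =>
      Game [seq dom_game n' (D :|: cnbhd v) | v <- enum T & left_can (col v) && playable D v]
           [seq dom_game n' (D :|: cnbhd v) | v <- enum T & right_can (col v) && playable D v]
  end.

(** The game from the start: nothing dominated; fuel #|T| suffices since each
    move dominates at least one new vertex. *)
Definition partizan_domination : game := dom_game #|T| set0.

End Domination.

(* Main.v *)
Require Import Defs.
From mathcomp Require Import all_boot.
Lemma valE a b : [/\ game_eq (Game (nseq a g0) (nseq b g0)) g1 = (0 < a) && (b == 0),
  game_eq (Game (nseq a g0) (nseq b g0)) gm1 = (a == 0) && (0 < b) &
  game_eq (Game (nseq a g0) (nseq b g0)) gstar = (0 < a) && (0 < b)].
Proof.
rewrite /game_eq /second_player_win /=.
rewrite !map_nseq /= !cats0 !has_cat !has_nseq /= ?has_nseq /=.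
by case: a => [|a]; case: b => [|b].
Qed.
Lemma structE (T : finType) (e : rel T) (col : T -> color) :
  0 < #|T| -> (forall u v : T, u != v -> e u v) ->
  partizan_domination e col =
  Game (nseq (count (fun v => left_can (col v)) (enum T)) g0)
       (nseq (count (fun v => right_can (col v)) (enum T)) g0).
Proof.
move=> T0 cpl.
have cT v : cnbhd e v = setT.
  apply/setP => u; rewrite !inE; case: (eqVneq u v) => //= uv.
  by apply: cpl; rewrite eq_sym.
have dT m : dom_game e col m setT = g0.
  case: m => [|m] //=.
  by rewrite !(@eq_filter _ _ pred0) ?filter_pred0 // => v; rewrite /playable cT subxx andbF.
have pl v : playable e set0 v.
  by apply/negP => /subsetP/(_ v); rewrite cT !inE => /(_ isT).
rewrite /partizan_domination; case: #|T| T0 => [|n] // _ /=.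
rewrite -!size_filter.
have H p : [seq dom_game e col n (set0 :|: cnbhd e v) | v <- enum T & p (col v) && playable e set0 v]
   = nseq (size [seq v <- enum T | p (col v)]) g0.
  rewrite (@eq_filter _ _ (fun v => p (col v))); last by move=> v; rewrite pl andbT.
  elim: [seq v <- enum T | p (col v)] => //= x s ->.
  by rewrite cT set0U dT.
by rewrite !H.
Qed.

Theorem proposition3 (T : finType) (e : rel T) (col : T -> color) :
  0 < #|T| ->
  symmetric e -> irreflexive e ->
  (forall u v : T, u != v -> e u v) ->
  [/\ (forall v, col v = cA) -> game_eq (partizan_domination e col) g1,
      (forall v, col v = cB) -> game_eq (partizan_domination e col) gm1 &
      ~ (forall v, col v = cA) -> ~ (forall v, col v = cB) ->
        game_eq (partizan_domination e col) gstar].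
Proof.
move=> T0 _ _ cpl; rewrite (@structE T e col T0 cpl).
have [x0 _] := card_gt0P T0.
have [E1 E2 E3] := valE (count (fun v => left_can (col v)) (enum T))
                        (count (fun v => right_can (col v)) (enum T)).
have pos p : ~ (forall v, ~~ p v) -> 0 < count p (enum T).
  move=> np; case: (posnP (count p (enum T))) => [c0|//]; exfalso; apply: np => v.
  move/eqP: c0; rewrite -leqn0 leqNgt -has_count => /hasPn /(_ v (mem_enum _ v)).
  by [].
have zer p : (forall v, ~~ p v) -> count p (enum T) = 0.
  by move=> h; apply/eqP; rewrite -leqn0 leqNgt -has_count; apply/hasPn => v _; apply: h.
split.
- move=> hA; rewrite E1 (zer (fun v => right_can (col v))) ?andbT; last by move=> v; rewrite hA.
  by apply: (pos (fun v => left_can (col v))) => h; move: (h x0); rewrite hA.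
- move=> hB; rewrite E2 (zer (fun v => left_can (col v))) //; last by move=> v; rewrite hB.
  by apply: (pos (fun v => right_can (col v))) => h; move: (h x0); rewrite hB.
- move=> nA nB; rewrite E3 (pos (fun v => left_can (col v))) ?(pos (fun v => right_can (col v))) //.
    by move=> h; apply: nA => v; move: (h v); case: (col v).
  by move=> h; apply: nB => v; move: (h v); case: (col v).
Qed.
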